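(* Let $q\ge5$ be odd. The $\mathrm{U}\Gamma$-lines (non-tangent unisecants of the twisted cubic $\mathcal{C}$ lying in an osculating plane) form one orbit under $G_q$. The subgroup of $G_q$ fixing a $\mathrm{U}\Gamma$-line has size $q-1$. For the $\mathrm{U}\Gamma$-line $\ell$ through $P_0=P(0,0,0,1)$ and $P(0,1,0,0)$, every element of the subgroup of $G_q$ fixing $\ell$ has a matrix of the form $\begin{pmatrix}1&0&0&0\\0&d&0&0\\0&0&d^2&0\\0&0&0&d^3\end{pmatrix}$, $d\in\mathbb{F}_q^*$.
   Context: $\mathrm{PG}(3,q)$ has points $P(x_0,x_1,x_2,x_3)$; $\boldsymbol{\pi}(c_0,c_1,c_2,c_3)$ is the plane $c_0x_0+c_1x_1+c_2x_2+c_3x_3=0$. For $t\in\mathbb{F}_q$ let $P_t=P(t^3,t^2,t,1)$, $P_\infty=P(1,0,0,0)$; the twisted cubic is $\mathcal{C}=\{P_t\}$. The osculating planes are $\pi_{\mathrm{osc}}(t)=\boldsymbol{\pi}(1,-3t,3t^2,-t^3)$ ($t\in\mathbb{F}_q$), $\pi_{\mathrm{osc}}(\infty)=\boldsymbol{\pi}(0,0,0,1)$. The tangent at $P_t$ ($t\in\mathbb{F}_q$) is the line through $P_t$ and $P(3t^2,2t,1,0)$; the tangent at $P_\infty$ is $x_2=x_3=0$. A $\mathrm{U}\Gamma$-line is a line meeting $\mathcal{C}$ in exactly one point, not a tangent, contained in an osculating plane. $G_q$ is the group of projectivities mapping $\mathcal{C}$ to itself; for $q\ge5$ its elements are $x\mapsto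 xM$ on row vectors, $M=\begin{pmatrix} a^3&a^2c&ac^2&c^3\\ 3a^2b&a^2d+2abc&bc^2+2acd&3c^2d\\ 3ab^2&b^2c+2abd&ad^2+2bcd&3cd^2\\ b^3&b^2d&bd^2&d^3\end{pmatrix}$, $ad-bc\ne0$, up to scalar. *)

(* Defs.v *)
(* PG(3,q) over a finite field F with q = #|F|. *)
From HB Require Import structures.
From mathcomp Require Import all_boot all_order all_algebra all_fingroup all_field.
Set Implicit Arguments. Unset Strict Implicit. Unset Printing Implicit Defensive.
Import Order.TTheory GRing.Theory.
Local Open Scope ring_scope.

Section TwistedCubic.
Variable F : finFieldType.

(* row vector (x0,x1,x2,x3); points are nonzero row vectors up to scalar *)
Definition vec4 (x0 x1 x2 x3 : F) : 'rV[F]_4 :=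
  \row_(j < 4) nth 0 [:: x0; x1; x2; x3] j.

(* points of the twisted cubic: Some t = P_t, None = P_infinity *)
Definition cpt (t : option F) : 'rV[F]_4 :=
  match t with Some t => vec4 (t ^+ 3) (t ^+ 2) t 1 | None => vec4 1 0 0 0 end.

(* coefficient vectors of the osculating planes *)
Definition osc (t : option F) : 'rV[F]_4 :=
  match t with
  | Some t => vec4 1 (- (3%:R * t)) (3%:R * t ^+ 2) (- t ^+ 3)
  | None => vec4 0 0 0 1
  end.

(* lines are 2x4 matrices of rank 2 (their row space); equality of lines is
   equality of row spaces (_ == _)%MS *)
Definition line2 (u v : 'rV[F]_4) : 'M[F]_(2, 4) := col_mx u v.

Definition tangent (t : option F) : 'M[F]_(2, 4) :=
  match t with
  | Some t => line2 (cpt (Some t)) (vec4 (3%:R * t ^+ 2) (2%:R * t) 1 0)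
  | None => line2 (vec4 1 0 0 0) (vec4 0 1 0 0)
  end.

Definition is_line (L : 'M[F]_(2, 4)) : bool := \rank L == 2%N.

Definition in_plane (L : 'M[F]_(2, 4)) (c : 'rV[F]_4) : bool := L *m c^T == 0.

Definition UGamma (L : 'M[F]_(2, 4)) : bool :=
  [&& is_line L,
      #|[set t : option F | (cpt t <= L)%MS]| == 1%N,
      [forall t : option F, ~~ (L == tangent t)%MS] &
      [exists t : option F, in_plane L (osc t)]].

(* the matrix M(a,b,c,d) of the context; acts by x |-> x M *)
Definition Mcub (a b c d : F) : 'M[F]_4 :=
  \matrix_(i < 4, j < 4) nth 0 (nth [::]
    [:: [:: a ^+ 3; a ^+ 2 * c; a * c ^+ 2; c ^+ 3];
        [:: 3%:R * a ^+ 2 * b; a ^+ 2 * d + 2%:R * a * b * c;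
            b * c ^+ 2 + 2%:R * a * c * d; 3%:R * c ^+ 2 * d];
        [:: 3%:R * a * b ^+ 2; b ^+ 2 * c + 2%:R * a * b * d;
            a * d ^+ 2 + 2%:R * b * c * d; 3%:R * c * d ^+ 2];
        [:: b ^+ 3; b ^+ 2 * d; b * d ^+ 2; d ^+ 3]] i) j.

(* a projectivity = the class of a matrix up to nonzero scalar *)
Definition pclass (M : 'M[F]_4) : {set 'M[F]_4} :=
  [set mu *: M | mu in [set mu : F | mu != 0]].

(* the group G_q of projectivities preserving the twisted cubic (q >= 5) *)
Definition Gq : {set {set 'M[F]_4}} :=
  [set pclass (Mcub x.1.1.1 x.1.1.2 x.1.2 x.2) |
     x in [set x : F * F * F * F | x.1.1.1 * x.2 - x.1.1.2 * x.1.2 != 0]].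

Definition maps_line (g : {set 'M[F]_4}) (L1 L2 : 'M[F]_(2, 4)) : bool :=
  [exists M in g, (L1 *m M == L2)%MS].

Definition stab (L : 'M[F]_(2, 4)) : {set {set 'M[F]_4}} :=
  [set g in Gq | maps_line g L L].

Definition ell0 : 'M[F]_(2, 4) := line2 (vec4 0 0 0 1) (vec4 0 1 0 0).

Definition diag4 (d : F) : 'M[F]_4 :=
  \matrix_(i < 4, j < 4) (if i == j then d ^+ i else 0).

End TwistedCubic.

(* Main.v *)
Require Import Defs.
From HB Require Import structures.
From mathcomp Require Import all_boot all_order all_algebra all_fingroup all_field.
From mathcomp Require Import ring.
Import Order.TTheory GRing.Theory.
Local Open Scope ring_scope.

Module Aux.
Set Implicit Arguments. Unset Strict Implicit. Unset Printing Implicit Defensive.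
Section S.
Variable F : finFieldType.
Implicit Types (a b c d x y : F).

Notation i4 k := (@Ordinal 4 k isT).

Lemma vec4_eta (u : 'rV[F]_4) :
  u = vec4 (u 0 (i4 0)) (u 0 (i4 1)) (u 0 (i4 2)) (u 0 (i4 3)).
Proof.
apply/rowP => j; rewrite !mxE.
by case: j => [[|[|[|[|k]]]] Hj] //=; congr (u _ _); apply: val_inj.
Qed.

Lemma vec4_inj x0 x1 x2 x3 y0 y1 y2 y3 :
  vec4 x0 x1 x2 x3 = vec4 y0 y1 y2 y3 :> 'rV[F]_4 -> [/\ x0 = y0, x1 = y1, x2 = y2 & x3 = y3].
Proof.
move=> e.
have h k (hk : (k < 4)%N) : vec4 x0 x1 x2 x3 0 (Ordinal hk) = vec4 y0 y1 y2 y3 0 (Ordinal hk) by rewrite e.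
by move: (h 0%N isT) (h 1%N isT) (h 2%N isT) (h 3%N isT); rewrite !mxE /=.
Qed.

Lemma vec4_lin x0 x1 x2 x3 y0 y1 y2 y3 a b :
  a *: vec4 x0 x1 x2 x3 + b *: vec4 y0 y1 y2 y3 =
  vec4 (a * x0 + b * y0) (a * x1 + b * y1) (a * x2 + b * y2) (a * x3 + b * y3) :> 'rV[F]_4.
Proof.
by apply/rowP => j; rewrite !mxE; case: j => [[|[|[|[|k]]]] Hj].
Qed.

Lemma vec4_scale x0 x1 x2 x3 a :
  a *: vec4 x0 x1 x2 x3 = vec4 (a * x0) (a * x1) (a * x2) (a * x3) :> 'rV[F]_4.
Proof. by apply/rowP => j; rewrite !mxE; case: j => [[|[|[|[|k]]]] Hj]. Qed.

Lemma vecMcub x0 x1 x2 x3 a b c d :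
  vec4 x0 x1 x2 x3 *m Mcub a b c d =
  vec4 (x0 * a ^+ 3 + x1 * (3%:R * a ^+ 2 * b) + x2 * (3%:R * a * b ^+ 2) + x3 * b ^+ 3)
       (x0 * (a ^+ 2 * c) + x1 * (a ^+ 2 * d + 2%:R * a * b * c)
          + x2 * (b ^+ 2 * c + 2%:R * a * b * d) + x3 * (b ^+ 2 * d))
       (x0 * (a * c ^+ 2) + x1 * (b * c ^+ 2 + 2%:R * a * c * d)
          + x2 * (a * d ^+ 2 + 2%:R * b * c * d) + x3 * (b * d ^+ 2))
       (x0 * c ^+ 3 + x1 * (3%:R * c ^+ 2 * d) + x2 * (3%:R * c * d ^+ 2) + x3 * d ^+ 3).
Proof.
apply/rowP => j; rewrite !mxE !big_ord_recr big_ord0 /= !mxE /=.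
by case: j => [[|[|[|[|k]]]] Hj] //=; ring.
Qed.

Lemma vdot x0 x1 x2 x3 y0 y1 y2 y3 :
  vec4 x0 x1 x2 x3 *m (vec4 y0 y1 y2 y3)^T =
  (x0 * y0 + x1 * y1 + x2 * y2 + x3 * y3)%:M :> 'M[F]_1.
Proof.
apply/matrixP => i j; rewrite !ord1 !mxE !big_ord_recr big_ord0 /= !mxE /=.
by rewrite mulr1n add0r.
Qed.

Lemma mx11_eq0 (z : F) : z%:M = 0 :> 'M[F]_1 -> z = 0.
Proof. by move=> h; have := congr1 (fun M : 'M[F]_1 => M 0 0) h; rewrite !mxE eqxx mulr1n. Qed.

Lemma mulMcub a b c d a' b' c' d' :
  Mcub a b c d *m Mcub a' b' c' d' =
  Mcub (a * a' + c * b') (b * a' + d * b') (a * c' + c * d') (b * c' + d * d').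
Proof.
apply/matrixP => i j; rewrite !mxE !big_ord_recr big_ord0 /= !mxE /=.
case: i => [[|[|[|[|?]]]] ?] //=; case: j => [[|[|[|[|?]]]] ?] //=; ring.
Qed.

Lemma Mcub_diag x : Mcub x 0 0 x = (x ^+ 3)%:M.
Proof.
apply/matrixP => i j; rewrite !mxE /=.
case: i => [[|[|[|[|?]]]] ?] //=; case: j => [[|[|[|[|?]]]] ?] //=; ring.
Qed.

Lemma Mcub_adj a b c d :
  Mcub a b c d *m Mcub d (- b) (- c) a = ((a * d - b * c) ^+ 3)%:M.
Proof. by rewrite mulMcub -Mcub_diag; congr Mcub; ring. Qed.

Lemma Mcub_adj' a b c d :
  Mcub d (- b) (- c) a *m Mcub a b c d = ((a * d - b * c) ^+ 3)%:M.
Proof. by rewrite mulMcub -Mcub_diag; congr Mcub; ring. Qed.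

Lemma mulMcub_ex a b c d a' b' c' d' :
  exists a'' b'' c'' d'', Mcub a b c d *m Mcub a' b' c' d' = Mcub a'' b'' c'' d''
    /\ a'' * d'' - b'' * c'' = (a * d - b * c) * (a' * d' - b' * c').
Proof. do 4 eexists; split; first exact: mulMcub. ring. Qed.

Lemma sub2 (x u v : 'rV[F]_4) : (x <= col_mx u v)%MS -> exists a b, x = a *: u + b *: v.
Proof.
case/submxP => D ->; rewrite -[D](@hsubmxK _ 1 1 1) mul_row_col.
exists ((lsubmx D : 'M[F]_1) 0 0); exists ((rsubmx D : 'M[F]_1) 0 0).
by rewrite -!mul_scalar_mx -!mx11_scalar.
Qed.

Lemma sub2_in (u v : 'rV[F]_4) a b : ((a *: u + b *: v)%R <= col_mx u v)%MS.
Proof.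
have := submx_refl (col_mx u v); rewrite col_mx_sub => /andP [hu hv].
by apply: addmx_sub; apply: scalemx_sub.
Qed.

Lemma sub_u (u v : 'rV[F]_4) : (u <= col_mx u v)%MS.
Proof. by have := submx_refl (col_mx u v); rewrite col_mx_sub => /andP []. Qed.
Lemma sub_v (u v : 'rV[F]_4) : (v <= col_mx u v)%MS.
Proof. by have := submx_refl (col_mx u v); rewrite col_mx_sub => /andP []. Qed.

Lemma eq2 (A B : 'M[F]_(2, 4)) : (A <= B)%MS -> \rank A = 2%N -> (A == B)%MS.
Proof.
move=> sAB rA; have [_ <-] := mxrank_leqif_eq sAB.
by rewrite eqn_leq mxrankS // rA rank_leq_row.
Qed.

Lemma rank2 (u v : 'rV[F]_4) (i j : 'I_4) :
  u 0 i = 1 -> u 0 j = 0 -> v 0 i = 0 -> v 0 j = 1 -> \rank (col_mx u v) = 2%N.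
Proof.
move=> ui uj vi vj.
pose S : 'M[F]_(4, 2) := \matrix_(k, l) (if l == 0 then (k == i)%:R else (k == j)%:R).
have dl (w : 'rV[F]_4) (k : 'I_4) : \sum_m w 0 m * (m == k)%:R = w 0 k.
  rewrite (bigD1 k) //= eqxx mulr1 big1 ?addr0 // => m /negbTE ->; by rewrite mulr0.
have e : col_mx u v *m S = 1%:M.
  rewrite mul_col_mx; apply/matrixP => k l; rewrite !mxE.
  case: splitP => k' hk; move: hk; rewrite ord1 => hk; rewrite !mxE;
  under eq_bigr do rewrite /S mxE;
  case: l => [[|[|?]] ?] //=; rewrite dl -val_eqE /= hk ?ui ?uj ?vi ?vj //.
apply/eqP; rewrite eqn_leq rank_leq_row /=.
by rewrite -{1}(mxrank1 F 2) -e mxrankM_maxl.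
Qed.

Lemma pclass_in (M : 'M[F]_4) : M \in pclass M.
Proof. by apply/imsetP; exists 1; rewrite ?inE ?oner_neq0 ?scale1r. Qed.

Lemma pclassP (X M : 'M[F]_4) : X \in pclass M -> exists2 mu : F, mu != 0 & X = mu *: M.
Proof. by case/imsetP => mu; rewrite inE => h ->; exists mu. Qed.

Lemma pclass_scale (k : F) (M : 'M[F]_4) : k != 0 -> pclass (k *: M) = pclass M.
Proof.
move=> k0; apply/setP => X; apply/imsetP/imsetP => -[mu]; rewrite inE => mu0 ->.
  by exists (mu * k); rewrite ?inE ?mulf_neq0 // scalerA.
exists (mu / k); first by rewrite inE mulf_neq0 // invr_neq0.
by rewrite scalerA mulfVK.
Qed.

Lemma maps_lineP (N : 'M[F]_4) (L1 L2 : 'M[F]_(2, 4)) :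
  maps_line (pclass N) L1 L2 = (L1 *m N == L2)%MS.
Proof.
apply/existsP/idP => [[X /andP [/pclassP [mu mu0 ->] /eqmxP h]] | h].
  apply/eqmxP; apply: (eqmx_trans _ h).
  by rewrite -scalemxAr; apply/eqmx_sym/eqmx_scale.
by exists N; rewrite pclass_in h.
Qed.

Lemma Gq_in a b c d : a * d - b * c != 0 -> pclass (Mcub a b c d) \in Gq F.
Proof. by move=> h; apply/imsetP; exists (a, b, c, d); rewrite ?inE. Qed.

Lemma GqP g : g \in Gq F ->
  exists a b c d, a * d - b * c != 0 /\ g = pclass (Mcub a b c d).
Proof. by case/imsetP => [[[[a b] c] d]]; rewrite inE /= => h ->; exists a, b, c, d. Qed.

Lemma Gq_mul a b c d a' b' c' d' :
  a * d - b * c != 0 -> a' * d' - b' * c' != 0 ->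
  pclass (Mcub a b c d *m Mcub a' b' c' d') \in Gq F.
Proof.
move=> h h'; have [a'' [b'' [c'' [d'' [-> e]]]]] := mulMcub_ex a b c d a' b' c' d'.
by apply: Gq_in; rewrite e mulf_neq0.
Qed.

Lemma ell0_Mcub a b c d :
  ell0 F *m Mcub a b c d =
  col_mx (vec4 (b ^+ 3) (b ^+ 2 * d) (b * d ^+ 2) (d ^+ 3))
         (vec4 (3%:R * a ^+ 2 * b) (a ^+ 2 * d + 2%:R * a * b * c)
               (b * c ^+ 2 + 2%:R * a * c * d) (3%:R * c ^+ 2 * d)).
Proof. by rewrite /ell0 /line2 (@mul_col_mx _ 1 1) !vecMcub !mul0r !mul1r !add0r !addr0. Qed.

Lemma rank_ell0 : \rank (ell0 F) = 2%N.
Proof. by apply: (@rank2 _ _ (i4 3) (i4 1)); rewrite !mxE. Qed.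

Lemma sub_ell0 (x : 'rV[F]_4) : (x <= ell0 F)%MS -> x 0 (i4 0) = 0 /\ x 0 (i4 2) = 0.
Proof.
by case/sub2 => a [b ->]; split; rewrite !mxE /=; ring.
Qed.

Lemma col2_sub (u v : 'rV[F]_4) m3 (C : 'M[F]_(m3, 4)) :
  ((col_mx u v : 'M[F]_(2, 4)) <= C)%MS = (u <= C)%MS && (v <= C)%MS.
Proof. exact: (@col_mx_sub _ 1 1). Qed.

Lemma col2_eq0 n (u v : 'rV[F]_n) :
  ((col_mx u v : 'M[F]_(2, n)) == 0) = (u == 0) && (v == 0).
Proof. exact: (@col_mx_eq0 _ 1 1). Qed.

Lemma sub2_coord x0 x1 x2 x3 y0 y1 y2 y3 z0 z1 z2 z3 a b :
  x0 = a * y0 + b * z0 -> x1 = a * y1 + b * z1 -> x2 = a * y2 + b * z2 ->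
  x3 = a * y3 + b * z3 ->
  (vec4 x0 x1 x2 x3 <= col_mx (vec4 y0 y1 y2 y3) (vec4 z0 z1 z2 z3))%MS.
Proof. by move=> -> -> -> ->; rewrite -vec4_lin; apply: sub2_in. Qed.

Lemma stab0 (h2 : (2%:R : F) != 0) a b c d : a * d - b * c != 0 ->
  (ell0 F *m Mcub a b c d <= ell0 F)%MS -> b = 0 /\ c = 0.
Proof.
move=> hdet; rewrite ell0_Mcub col2_sub => /andP [/sub_ell0 [h0 _] /sub_ell0 [_ h2']].
move: h0 h2'; rewrite !mxE /= => h0 h2'.
have b0 : b = 0 by move: h0 => /eqP; rewrite expf_eq0 /= => /eqP.
subst b; split=> //.
move: hdet; rewrite mul0r subr0 mulf_eq0 negb_or => /andP [a0 d0].
move: h2'; rewrite mul0r add0r => /eqP.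
by rewrite !mulf_eq0 (negbTE h2) (negbTE a0) (negbTE d0) /= orbF => /eqP.
Qed.

Lemma stab0' x y : x != 0 -> y != 0 -> (ell0 F *m Mcub x 0 0 y == ell0 F)%MS.
Proof.
move=> x0 y0; apply/eqmxP/eqmx_sym/eqmxP; apply: eq2; last exact: rank_ell0.
rewrite ell0_Mcub {1}/ell0 /line2 col2_sub; apply/andP; split.
  apply: (sub2_coord (a := (y ^- 3)) (b := 0)) => //; field; exact: y0.
by apply: (sub2_coord (a := 0) (b := ((x ^+ 2 * y)^-1))) => //;
  field; rewrite ?x0 ?y0.
Qed.

Lemma cpt_ell0 t : (cpt t <= ell0 F)%MS = (t == Some 0).
Proof.
case: t => [s|] /=.
  apply/idP/idP => [/sub_ell0 [_ h] | /eqP [->]].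
    by move: h; rewrite !mxE /= => ->.
  by rewrite /ell0 /line2; apply: (sub2_coord (a := 1) (b := 0)); ring.
apply/negP => /sub_ell0 [h _]; move: h; rewrite !mxE /= => /eqP; by rewrite oner_eq0.
Qed.

Lemma UGamma_ell0 : UGamma (ell0 F).
Proof.
apply/and4P; split.
- by rewrite /is_line rank_ell0.
- apply/cards1P; exists (Some 0); apply/setP => t; by rewrite !inE cpt_ell0.
- apply/forallP => t; apply/negP => /andP [_]; case: t => [t|];
  rewrite /tangent /line2 col2_sub => /andP [hu hv].
    by move: hv => /sub_ell0 [_]; rewrite !mxE /= => /eqP; rewrite oner_eq0.
  by move: hu => /sub_ell0 [h _]; move: h; rewrite !mxE /= => /eqP; rewrite oner_eq0.
- apply/existsP; exists (Some 0); rewrite /in_plane /ell0 /line2 (@mul_col_mx _ 1 1) !vdot.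
  rewrite col2_eq0; apply/andP; split; apply/eqP; rewrite -scalemx1; 
  rewrite (_ : _ + _ = 0) ?scale0r //; ring.
Qed.

Definition transp (t0 : option F) : 'M[F]_4 :=
  match t0 with Some t => Mcub 1 (- t) 0 1 | None => Mcub 0 1 1 0 end.
Definition back (t0 : option F) : 'M[F]_4 :=
  match t0 with Some t => Mcub 1 t 0 1 | None => Mcub 0 1 1 0 end.

Lemma Mcub1 : Mcub 1 0 0 1 = 1%:M :> 'M[F]_4.
Proof. by rewrite Mcub_diag expr1n. Qed.

Lemma transp_back (t0 : option F) : transp t0 *m back t0 = 1%:M.
Proof. by case: t0 => [t|] /=; rewrite mulMcub -Mcub1; congr Mcub; ring. Qed.

Lemma transp_osc (t0 : option F) : transp t0 *m (osc (Some 0))^T = (osc t0)^T.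
Proof.
case: t0 => [t|] /=; apply/matrixP => i j; rewrite !ord1 !mxE !big_ord_recr big_ord0 /= !mxE /=;
case: i => [[|[|[|[|?]]]] ?] //=; ring.
Qed.

Lemma cpt_transp (t0 : option F) : cpt t0 *m transp t0 = vec4 0 0 0 1.
Proof. by case: t0 => [t|] /=; rewrite vecMcub; congr vec4; ring. Qed.

Lemma col_mx2_congr (u u' v v' : 'rV[F]_4) : u = u' -> v = v' ->
  col_mx u v = col_mx u' v' :> 'M[F]_(2, 4).
Proof. by move=> -> ->. Qed.

Lemma tangent_transp (t0 : option F) : tangent t0 *m transp t0 = tangent (Some 0).
Proof.
by case: t0 => [t|]; rewrite /tangent /line2 (@mul_col_mx _ 1 1) !vecMcub;
  apply: col_mx2_congr; congr vec4; ring.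
Qed.

Lemma osc_cpt (s t : option F) : cpt s *m (osc t)^T = 0 -> s = t.
Proof.
case: s => [s|]; case: t => [t|] //=; rewrite vdot => /mx11_eq0 h.
- have : (s - t) ^+ 3 = 0 by rewrite -h; ring.
  by move/eqP; rewrite expf_eq0 /= subr_eq0 => /eqP ->.
- have : (1 : F) = 0 by rewrite -h; ring.
  by move/eqP; rewrite oner_eq0.
- have : (1 : F) = 0 by rewrite -h; ring.
  by move/eqP; rewrite oner_eq0.
Qed.

Lemma find_w (L' : 'M[F]_(2, 4)) x0 x1 x2 x3 : (vec4 x0 x1 x2 x3 <= L')%MS ->
  (vec4 0 0 0 1 <= L')%MS -> x0 = 0 -> x1 != 0 ->
  exists m, (vec4 0 1 m 0 <= L')%MS.
Proof.
move=> xL eL hx0 hx1; exists (x2 / x1).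
have -> : vec4 0 1 (x2 / x1) 0 =
   x1^-1 *: vec4 x0 x1 x2 x3 + (- (x3 / x1)) *: vec4 0 0 0 1.
  rewrite vec4_lin hx0; congr vec4; field; exact: hx1.
by apply: addmx_sub; apply: scalemx_sub.
Qed.

Lemma final_params (t0 : option F) c :
  exists a b c' d, a * d - b * c' != 0 /\ Mcub 1 0 c 1 *m back t0 = Mcub a b c' d.
Proof.
case: t0 => [t|] /=; rewrite mulMcub.
  exists (1*1 + c*t), (0*1 + 1*t), (1*0 + c*1), (0*0 + 1*1); split => //.
  have -> : (1*1 + c*t) * (0*0 + 1*1) - (0*1 + 1*t) * (1*0 + c*1) = 1 by ring.
  exact: oner_neq0.
exists (1*0 + c*1), (0*0 + 1*1), (1*1 + c*0), (0*1 + 1*0); split => //.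
have -> : (1*0 + c*1) * (0*1 + 1*0) - (0*0 + 1*1) * (1*1 + c*0) = -1 by ring.
by rewrite oppr_eq0 oner_neq0.
Qed.

Lemma ugamma_orbit (h2 : (2%:R : F) != 0) (L : 'M[F]_(2, 4)) : UGamma L ->
  exists a b c d, a * d - b * c != 0 /\ (ell0 F *m Mcub a b c d == L)%MS.
Proof.
case/and4P => rk /cards1P [s0 Hs] /forallP ntan /existsP [t0 /eqP pl].
have cs : (cpt s0 <= L)%MS by have := set11 s0; rewrite -Hs inE.
have st : s0 = t0.
  case/submxP: cs => D eD; apply: osc_cpt.
  by rewrite eD -mulmxA pl mulmx0.
subst s0.
set L' := L *m transp t0.
have pl' : L' *m (osc (Some 0))^T = 0 by rewrite /L' -mulmxA transp_osc.
have e3L : (vec4 0 0 0 1 <= L')%MS by rewrite -(cpt_transp t0) submxMr.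
have rk' : \rank L' = 2%N.
  have [u _] := mulmx1_unit (transp_back t0).
  by rewrite /L' mxrankMfree ?row_free_unit //; apply/eqP.
have ntan' : ~~ (L' == tangent (Some 0))%MS.
  apply/negP => /eqmxP h; have := ntan t0; apply/negP; rewrite negbK.
  apply/eqmxP; have := eqmxMr (back t0) h.
  by rewrite /L' -(tangent_transp t0) -!mulmxA !transp_back !mulmx1.
have eL : L' = col_mx (usubmx (L' : 'M_(1 + 1, 4))) (dsubmx (L' : 'M_(1 + 1, 4))).
  by rewrite vsubmxK.
set u := usubmx _ in eL; set v := dsubmx _ in eL.
have uL : (u <= L')%MS by rewrite eL sub_u.
have vL : (v <= L')%MS by rewrite eL sub_v.
move: pl'; rewrite eL (@mul_col_mx _ 1 1) => /eqP; rewrite col2_eq0 => /andP [/eqP hu /eqP hv].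
have u0 : u 0 (i4 0) = 0.
  have h := hu; rewrite [u]vec4_eta vdot in h; move/mx11_eq0: h => h.
  by apply: (etrans _ h); ring.
have v0 : v 0 (i4 0) = 0.
  have h := hv; rewrite [v]vec4_eta vdot in h; move/mx11_eq0: h => h.
  by apply: (etrans _ h); ring.
have [m hm] : exists m, (vec4 0 1 m 0 <= L')%MS.
  case: (eqVneq (u 0 (i4 1)) 0) => u1; last by rewrite [u]vec4_eta in uL; exact: find_w uL e3L u0 u1.
  case: (eqVneq (v 0 (i4 1)) 0) => v1; last by rewrite [v]vec4_eta in vL; exact: find_w vL e3L v0 v1.
  exfalso; move/negP: ntan'; apply; apply: eq2 rk'.
  rewrite eL /tangent /line2 col2_sub; apply/andP; split.
    rewrite [u]vec4_eta u0 u1.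
    by apply: (sub2_coord (a := u 0 (i4 3)) (b := u 0 (i4 2))); ring.
  rewrite [v]vec4_eta v0 v1.
  by apply: (sub2_coord (a := v 0 (i4 3)) (b := v 0 (i4 2))); ring.
have hcol : (col_mx (vec4 0 0 0 1) (vec4 0 1 m 0) == L')%MS.
  apply: eq2; first by rewrite col2_sub e3L hm.
  by apply: (rank2 (i := i4 3) (j := i4 1)); rewrite !mxE.
pose c := m / 2%:R.
have hc : (ell0 F *m Mcub 1 0 c 1 == L')%MS.
  move/eqmxP: hcol => hcol; apply/eqmxP; apply: eqmx_trans hcol.
  apply/eqmx_sym/eqmxP; apply: eq2.
    rewrite ell0_Mcub col2_sub; apply/andP; split.
      by apply: (sub2_coord (a := 1) (b := 0)); ring.
    apply: (sub2_coord (a := - (3%:R * c ^+ 2)) (b := 1)); rewrite /c; field; exact: h2.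
  by apply: (rank2 (i := i4 3) (j := i4 1)); rewrite !mxE.
have fin : (ell0 F *m (Mcub 1 0 c 1 *m back t0) == L)%MS.
  have LL : L' *m back t0 = L by rewrite /L' -mulmxA transp_back mulmx1.
  rewrite mulmxA -LL; move/eqmxP: hc => hc; apply/eqmxP; exact: eqmxMr.
have [a [b [c' [d [hd e]]]]] := final_params t0 c.
by exists a, b, c', d; rewrite -e.
Qed.

End S.

Section P2.
Variable F : finFieldType.
Notation i4 k := (@Ordinal 4 k isT).
Variables (a b c d : F).
Hypothesis hd : a * d - b * c != 0.
Local Notation Madj := (Mcub d (- b) (- c) a).
Local Notation M0 := (Mcub a b c d).
Local Notation del := (a * d - b * c).

Lemma conjA (X : 'M[F]_4) : M0 *m (Madj *m X *m M0) *m Madj = (del ^+ 6) *: X.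
Proof.
rewrite !mulmxA Mcub_adj mul_scalar_mx -!scalemxAl -mulmxA Mcub_adj mul_mx_scalar.
by rewrite scalerA -exprD.
Qed.

Lemma conjB (X : 'M[F]_4) : Madj *m (M0 *m X *m Madj) *m M0 = (del ^+ 6) *: X.
Proof.
rewrite !mulmxA Mcub_adj' mul_scalar_mx -!scalemxAl -mulmxA Mcub_adj' mul_mx_scalar.
by rewrite scalerA -exprD.
Qed.

Lemma Mcub_diag_scale (x y : F) : x != 0 -> Mcub 1 0 0 (y / x) = x ^- 3 *: Mcub x 0 0 y.
Proof.
move=> x0; apply/matrixP => i j; rewrite !mxE /=.
by case: i => [[|[|[|[|?]]]] ?] //=; case: j => [[|[|[|[|?]]]] ?] //=; field.
Qed.

Lemma hadj : d * a - - b * - c != 0.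
Proof. by rewrite (_ : d * a - - b * - c = del) //; ring. Qed.

Lemma stab_card (h2 : (2%:R : F) != 0) (L : 'M[F]_(2, 4)) :
  (ell0 F *m M0 == L)%MS -> #|stab L| = (#|F|).-1.
Proof.
move/eqmxP => e.
have dn0 : del ^+ 3 != 0 by rewrite expf_neq0.
pose f (r : F) := pclass (Madj *m Mcub 1 0 0 r *m M0).
have fs : stab L = f @: [set r : F | r != 0].
  apply/setP => g; apply/idP/imsetP.
  - rewrite inE => /andP [/GqP [a' [b' [c' [d' [hd' ->]]]]]]; rewrite maps_lineP => /eqmxP hA.
    have [x [b'' [c'' [y [eB hdB]]]]] := mulMcub_ex a b c d a' b' c' d'.
    have [x2 [b3 [c3 [y2 [eB2 hdB2]]]]] := mulMcub_ex x b'' c'' y d (- b) (- c) a.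
    have s1 : (ell0 F *m (M0 *m Mcub a' b' c' d') *m Madj :=: L *m Madj)%MS.
      rewrite mulmxA; apply: eqmxMr; exact: eqmx_trans (eqmxMr _ e) hA.
    have s2 : (L *m Madj :=: ell0 F)%MS.
      apply: eqmx_trans (eqmxMr _ (eqmx_sym e)) _.
      by rewrite -mulmxA Mcub_adj mul_mx_scalar; exact: eqmx_scale.
    have hB : (ell0 F *m Mcub x2 b3 c3 y2 <= ell0 F)%MS.
      by rewrite -eB2 -eB mulmxA (eqmx_trans s1 s2) submx_refl.
    have hdet2 : x2 * y2 - b3 * c3 != 0 by rewrite hdB2 hdB !mulf_neq0 // hadj.
    have [b30 c30] := stab0 h2 hdet2 hB; subst b3 c3.
    move: hdet2; rewrite mul0r subr0 mulf_eq0 negb_or => /andP [x0 y0].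
    exists (y2 / x2); first by rewrite inE mulf_neq0 ?invr_neq0.
    rewrite /f (Mcub_diag_scale _ x0) -eB2 -eB -scalemxAr -scalemxAl conjB scalerA.
    by rewrite pclass_scale // mulf_neq0 ?invr_neq0 ?expf_neq0.
  - case => r; rewrite inE => r0 ->; rewrite inE; apply/andP; split.
      have [p1 [p2 [p3 [p4 [ep hp]]]]] := mulMcub_ex d (- b) (- c) a 1 0 0 r.
      rewrite /f ep; apply: Gq_mul => //.
      by rewrite hp mulf_neq0 ?hadj // mul0r subr0 mul1r.
    rewrite /f maps_lineP; apply/eqmxP.
    apply: eqmx_trans (eqmxMr _ (eqmx_sym e)) _.
    rewrite !mulmxA -(mulmxA (ell0 F)) Mcub_adj mul_mx_scalar -!scalemxAl.
    apply: eqmx_trans (eqmx_scale _ dn0) _.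
    apply: eqmx_trans _ e; apply: eqmxMr; apply/eqmxP; exact: stab0' (oner_neq0 F) r0.
rewrite fs card_in_imset.
  by rewrite -(cardsC1 (0 : F)); apply: eq_card => r; rewrite !inE.
move=> r s; rewrite !inE => r0 s0 efs.
have : Madj *m Mcub 1 0 0 r *m M0 \in f s by rewrite -efs pclass_in.
case/pclassP => mu mu0 eq.
have := congr1 (fun X => M0 *m X *m Madj) eq.
rewrite /= conjA -scalemxAr -scalemxAl conjA scalerA => E.
have E00 := congr1 (fun X : 'M[F]_4 => X (i4 0) (i4 0)) E.
have E11 := congr1 (fun X : 'M[F]_4 => X (i4 1) (i4 1)) E.
move: E00 E11; rewrite !mxE /= => E00 E11.
have k0 : del ^+ 6 != 0 by rewrite expf_neq0.
have mu1 : mu = 1.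
  by apply: (mulIf k0); move: E00; rewrite expr1n !mulr1 mul1r => E0; rewrite -E0.
move: E11; rewrite expr1n !mul1r !mulr0 !addr0 mu1 mul1r.
exact: mulfI.
Qed.
End P2.

End Aux.
Import Aux.

Lemma two_neq0 (F : finFieldType) : odd #|F| -> (2%:R : F) != 0.
Proof.
move=> oddF; apply/negP => /eqP h2.
have pc : (2%N \in [pchar F]) by rewrite inE h2 eqxx.
have := card_pprimeChar pc.
change #|pPrimeCharType pc| with #|F|.
set n := logn 2 _ => e.
have g1 := finNzRing_gt1 F.
move: oddF g1; rewrite e; case: n {e} => [|n] //=.
by rewrite expnS oddM.
Qed.

Theorem theorem6p2 (F : finFieldType) :
  odd #|F| -> (5 <= #|F|)%N ->
  [/\ (forall L1 L2 : 'M[F]_(2, 4), UGamma L1 -> UGamma L2 ->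
         exists2 g, g \in Gq F & maps_line g L1 L2),
      (forall L : 'M[F]_(2, 4), UGamma L -> #|stab L| = (#|F|).-1),
      UGamma (ell0 F) &
      (forall g, g \in stab (ell0 F) ->
         exists2 d : F, d != 0 & diag4 d \in g)].
Proof.
move=> oddF _; have h2 := two_neq0 F oddF.
split.
- move=> L1 L2 U1 U2.
  have [a1 [b1 [c1 [d1 [hd1 e1]]]]] := ugamma_orbit h2 U1.
  have [a2 [b2 [c2 [d2 [hd2 e2]]]]] := ugamma_orbit h2 U2.
  exists (pclass (Mcub d1 (- b1) (- c1) a1 *m Mcub a2 b2 c2 d2)).
    by apply: Gq_mul => //; apply: hadj.
  rewrite maps_lineP; move/eqmxP: e1 => e1; move/eqmxP: e2 => e2; apply/eqmxP.
  apply: eqmx_trans (eqmxMr _ (eqmx_sym e1)) _.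
  rewrite !mulmxA -(mulmxA (ell0 F)) Mcub_adj mul_mx_scalar -scalemxAl.
  apply: eqmx_trans (eqmx_scale _ _) e2.
  by rewrite expf_neq0.
- move=> L UL; have [a [b [c [d [hd e]]]]] := ugamma_orbit h2 UL.
  have := stab_card hd h2 e; move=> H; exact: H.
- exact: UGamma_ell0.
- move=> g; rewrite inE => /andP [/GqP [a [b [c [d [hd ->]]]]]].
  rewrite maps_lineP => /andP [hs _].
  have [b0 c0] := stab0 h2 hd hs; subst b c.
  move: hd; rewrite mul0r subr0 mulf_eq0 negb_or => /andP [a0 d0].
  exists (d / a); first by rewrite mulf_neq0 ?invr_neq0.
  apply/imsetP; exists (a ^- 3); first by rewrite inE invr_neq0 ?expf_neq0.
  apply/matrixP => i j; rewrite !mxE /=.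
  by case: i => [[|[|[|[|?]]]] ?] //=; case: j => [[|[|[|[|?]]]] ?] //=; field.
Qed.
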